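(* Let $A\in\mathbb{C}^{n\times n}$ be Hermitian and let $Q\in\mathbb{C}^{n\times k}$, $2\le k\le n$, have orthonormal columns. Let $Q^*AQ=\Omega\widehat\Lambda\Omega^*$ be an eigendecomposition with $\Omega$ unitary and $\widehat\Lambda=\mathrm{diag}(\widehat\lambda_1,\ldots,\widehat\lambda_k)$, and let $\widehat X=[\widehat x_1,\ldots,\widehat x_k]=Q\Omega$ (Ritz values $\widehat\lambda_i$, Ritz vectors $\widehat x_i$). Let $Q_\perp\in\mathbb{C}^{n\times(n-k)}$ be such that $[Q\ Q_\perp]$ is unitary, so that $$[Q\Omega,\,Q_\perp]^*A[Q\Omega,\,Q_\perp]=\begin{bmatrix}\widehat\Lambda & R^*\\ R & A_3\end{bmatrix},\qquad R=Q_\perp^*AQ\Omega=[r_1,\ldots,r_k],\quad A_3=Q_\perp^*AQ_\perp .$$ Consider the Ritz pair $(\widehat\lambda,\widehat x)=(\widehat\lambda_1,\widehat x_1)$, let $\widehat\Lambda_2=\mathrm{diag}(\widehat\lambda_2,\ldots,\widehat\lambda_k)$ and $R_2=[r_2,\ldots,r_k]$. Let $(\lambda,x)$ be an eigenpair of $A$ with $\|x\|=1$, and define $\mathrm{Gap}=\min|\lambda-\lambda(A_3)|$ and $\mathrm{gap}=\min|\lambda-\lambda(\widehat\Lambda_2)|$. Then $$\sin\angle(x,\widehat x)\le\frac{\|R\|}{\mathrm{Gap}}\sqrt{1+\frac{\|R_2\|^2}{\mathrm{gap}^2}}\ \le\ \frac{\|R\|}{\mathrm{Gap}}\Big(1+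\frac{\|R_2\|}{\mathrm{gap}}\Big).$$
   Context: $\|\cdot\|$ is the Euclidean norm for vectors and the spectral norm for matrices. $\lambda(M)$ denotes the set of eigenvalues of a Hermitian matrix $M$, and $\min|\lambda-\lambda(M)|$ is the distance from $\lambda$ to that set. For unit vectors, $\angle(x,\widehat x)=\arccos|\widehat x^*x|$. Note $\|r_i\|=\|A\widehat x_i-\widehat\lambda_i\widehat x_i\|$. A bound with a vanishing denominator is interpreted as $+\infty$. *)

(* Defs.v *)
From HB Require Import structures.
From mathcomp Require Import all_boot all_order all_algebra.
From mathcomp Require Import complex.
From mathcomp Require Import all_classical all_reals all_analysis.
Set Implicit Arguments. Unset Strict Implicit. Unset Printing Implicit Defensive.
Import Order.TTheory GRing.Theory Num.Theory.
Local Open Scope ring_scope.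
Local Open Scope classical_set_scope.

Section Defs.
Variable R : realType.
Local Notation C := (R[i]).

Definition cabs (z : C) : R := Normc.normc z.

Definition mxadj (p q : nat) (M : 'M[C]_(p, q)) : 'M[C]_(q, p) :=
  map_mx (@conjc R) M^T.

Definition vnorm (p : nat) (v : 'cV[C]_p) : R :=
  Num.sqrt (\sum_(i < p) cabs (v i 0) ^+ 2).

Definition specnorm (p q : nat) (M : 'M[C]_(p, q)) : R :=
  sup [set vnorm (M *m v) | v in [set v : 'cV[C]_q | vnorm v = 1]].

(* min |lam - lambda(M)| : distance from lam to the set of eigenvalues of M,
   as an extended real (= +oo when M has no eigenvalue, i.e. M is 0 x 0) *)
Definition specdist (p : nat) (M : 'M[C]_p) (lam : C) : \bar R :=
  ereal_inf [set (cabs (lam - mu))%:E | mu in [set mu | eigenvalue M mu]].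

Definition vangle (p : nat) (x xh : 'cV[C]_p) : R :=
  acos (cabs ((mxadj xh *m x) 0 0)).

End Defs.

(* Main.v *)
Require Import Defs.
From HB Require Import structures.
From mathcomp Require Import all_boot all_order all_algebra.
From mathcomp Require Import complex.
From mathcomp Require Import all_classical all_reals all_analysis.
From mathcomp Require Import spectral sesquilinear.
Import Order.TTheory GRing.Theory Num.Theory.
Local Open Scope ring_scope.

Module Helpers.
Set Implicit Arguments. Unset Strict Implicit. Unset Printing Implicit Defensive.
Section H.
Variable R : realType.
Local Notation C := R[i].
Local Open Scope complex_scope.
Local Open Scope sesquilinear_scope.

Lemma conjCE (z : C) : Num.conj z = conjc z.
Proof. by []. Qed.

Lemma cabsC (z : C) : (cabs z)%:C = `|z|.
Proof. by rewrite normc_def /cabs; case: z. Qed.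

Lemma cabs_ge0 (z : C) : 0 <= cabs z.
Proof. by rewrite /cabs; case: z => a b /=; rewrite sqrtr_ge0. Qed.

Lemma cabs_sqrC (z : C) : (cabs z ^+ 2)%:C = z^* * z.
Proof.
case: z => a b; rewrite /cabs /= sqr_sqrtr ?addr_ge0 ?sqr_ge0 //.
by apply/eqP; rewrite eq_complex /= !expr2 !mulNr opprK [b * a]mulrC subrr !eqxx.
Qed.

Lemma mxadj_mul p q r (A : 'M[C]_(p, q)) (B : 'M[C]_(q, r)) :
  mxadj (A *m B) = mxadj B *m mxadj A.
Proof. by rewrite /mxadj trmx_mul map_mxM. Qed.

Lemma mxadjK p q (A : 'M[C]_(p, q)) : mxadj (mxadj A) = A.
Proof. by apply/matrixP => i j; rewrite !mxE conjcK. Qed.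


Definition nrm2 p (v : 'cV[C]_p) : R := \sum_i cabs (v i 0) ^+ 2.

Lemma nrm2C p (v : 'cV[C]_p) : (nrm2 v)%:C = (mxadj v *m v) 0 0.
Proof.
rewrite /nrm2 rmorph_sum mxE; apply: eq_bigr => i _.
by rewrite !mxE; apply: cabs_sqrC.
Qed.

Lemma nrm2_ge0 p (v : 'cV[C]_p) : 0 <= nrm2 v.
Proof. by apply: sumr_ge0 => i _; rewrite sqr_ge0. Qed.

Lemma nrm2_unitary p q (U : 'M[C]_(q, p)) (v : 'cV[C]_p) :
  mxadj U *m U = 1%:M -> nrm2 (U *m v) = nrm2 v.
Proof.
move=> hU; apply: complexI; rewrite !nrm2C mxadj_mul.
by rewrite -mulmxA (mulmxA (mxadj U)) hU mul1mx.
Qed.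

Lemma nrm2_col p q (u : 'cV[C]_p) (v : 'cV[C]_q) :
  nrm2 (col_mx u v) = nrm2 u + nrm2 v.
Proof.
rewrite /nrm2 big_split_ord /=; congr (_ + _); apply: eq_bigr => i _.
  by rewrite col_mxEu.
by rewrite col_mxEd.
Qed.

Lemma nrm2_scale p (c : C) (v : 'cV[C]_p) :
  nrm2 (c *: v) = cabs c ^+ 2 * nrm2 v.
Proof.
rewrite /nrm2 mulr_sumr; apply: eq_bigr => i _.
by rewrite mxE /cabs Normc.normcM exprMn.
Qed.

Lemma cabsR (r : R) : cabs r%:C = `|r|.
Proof. by rewrite /cabs /= expr0n /= addr0 sqrtr_sqr. Qed.

Lemma nrm2_eq0 p (v : 'cV[C]_p) : nrm2 v = 0 -> v = 0.
Proof.
move=> /eqP; rewrite psumr_eq0 => [/allP h|i _]; last by rewrite sqr_ge0.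
apply/matrixP => i j; rewrite ord1 mxE; apply: Normc.eq0_normc.
have /h : i \in index_enum 'I_p by rewrite mem_index_enum.
by rewrite /= sqrf_eq0 => /eqP.
Qed.

Lemma cabs_sum I (r : seq I) (P : pred I) (F : I -> C) :
  cabs (\sum_(i <- r | P i) F i) <= \sum_(i <- r | P i) cabs (F i).
Proof.
rewrite -lecR cabsC.
have -> : ((\sum_(i <- r | P i) cabs (F i))%:C) = \sum_(i <- r | P i) `|F i|.
  by rewrite rmorph_sum; apply: eq_bigr => i _; apply: cabsC.
exact: ler_norm_sum.
Qed.


Lemma vnormE p (v : 'cV[C]_p) : vnorm v = Num.sqrt (nrm2 v).
Proof. by []. Qed.

Lemma cabs0 : cabs (0 : C) = 0.
Proof. exact: Normc.normc0. Qed.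

Lemma nrm2_0 p : nrm2 (0 : 'cV[C]_p) = 0.
Proof. by rewrite /nrm2 big1 // => i _; rewrite mxE cabs0 expr0n. Qed.

Lemma unit_entry_le1 p (w : 'cV[C]_p) j : nrm2 w = 1 -> cabs (w j 0) <= 1.
Proof.
move=> hw; rewrite -(@ler_pXn2r _ 2) ?nnegrE ?cabs_ge0 // expr1n -hw.
by rewrite /nrm2 (bigD1 j) //= lerDl sumr_ge0 // => i _; rewrite sqr_ge0.
Qed.

Lemma sqrt_eq1 (r : R) : Num.sqrt r = 1 -> 0 <= r -> r = 1.
Proof. by move=> h r0; rewrite -(sqr_sqrtr r0) h expr1n. Qed.

Lemma sn_ub p q (M : 'M[C]_(p, q)) (v : 'cV[C]_q) :
  vnorm v = 1 -> vnorm (M *m v) <= specnorm M.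
Proof.
move=> hv; apply: sup_upper_bound; last by exists v.
split; first by exists (vnorm (M *m v)); exists v.
exists (Num.sqrt (\sum_i (\sum_j cabs (M i j)) ^+ 2)) => _ [w hw <-].
have hw1 : nrm2 w = 1 by apply: sqrt_eq1 hw (nrm2_ge0 _).
rewrite vnormE ler_sqrt; last by rewrite sumr_ge0 // => i _; rewrite sqr_ge0.
apply: ler_sum => i _.
apply: lerXn2r; [by rewrite nnegrE cabs_ge0|
  by rewrite nnegrE sumr_ge0 // => j _; exact: cabs_ge0|].
rewrite mxE; apply: le_trans (cabs_sum _ _ _) _.
apply: ler_sum => j _; rewrite /cabs Normc.normcM.
by rewrite ler_piMr ?(cabs_ge0 (M i j)) //; exact: (unit_entry_le1 j hw1).
Qed.


Lemma sn_mul p q (M : 'M[C]_(p, q)) (v : 'cV[C]_q) :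
  vnorm (M *m v) <= specnorm M * vnorm v.
Proof.
have [v0|vn0] := eqVneq (nrm2 v) 0.
  by rewrite (nrm2_eq0 v0) mulmx0 !vnormE !nrm2_0 !sqrtr0 mulr0.
set s := vnorm v.
have s0 : 0 < s by rewrite /s vnormE sqrtr_gt0 lt_def vn0 nrm2_ge0.
set u := (s^-1)%:C *: v.
have hu : vnorm u = 1.
  rewrite vnormE nrm2_scale cabsR ger0_norm ?invr_ge0 ?(ltW s0) //.
  rewrite -(sqr_sqrtr (nrm2_ge0 v)) -vnormE -/s -exprMn mulVf ?gt_eqF //.
  by rewrite expr1n sqrtr1.
have := sn_ub M hu; rewrite /u -scalemxAr vnormE nrm2_scale cabsR.
rewrite ger0_norm ?invr_ge0 ?(ltW s0) // sqrtrM ?sqr_ge0 // sqrtr_sqr.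
rewrite ger0_norm ?invr_ge0 ?(ltW s0) // -vnormE => h.
have := ler_wpM2l (ltW s0) h; rewrite mulrA mulfV ?gt_eqF // mul1r mulrC.
done.
Qed.

Lemma sn_mul2 p q (M : 'M[C]_(p, q)) (v : 'cV[C]_q) :
  nrm2 (M *m v) <= specnorm M ^+ 2 * nrm2 v.
Proof.
have h := sn_mul M v.
have h0 : 0 <= vnorm (M *m v) by rewrite vnormE sqrtr_ge0.
have := lerXn2r 2 h0 (le_trans h0 h) h.
by rewrite !vnormE exprMn !sqr_sqrtr ?nrm2_ge0.
Qed.

Lemma sn_ge0 p q (M : 'M[C]_(p, q)) : (0 < q)%N -> 0 <= specnorm M.
Proof.
move=> q0; pose j0 := Ordinal q0.
have he : vnorm (delta_mx j0 0 : 'cV[C]_q) = 1.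
  rewrite vnormE /nrm2 (bigD1 j0) //= big1 => [|i ne].
    by rewrite mxE !eqxx /= /cabs /= !expr1n !expr0n /= !addr0 sqrtr1 expr1n sqrtr1.
  by rewrite mxE (negPf ne) /= !expr0n /= addr0 sqrtr0 expr0n.
apply: le_trans (sn_ub M he); rewrite vnormE sqrtr_ge0 //.
Qed.

Lemma cs p (u w : 'cV[C]_p) :
  cabs ((mxadj u *m w) 0 0) ^+ 2 <= nrm2 u * nrm2 w.
Proof.
case: (CauchySchwarz (@dotmx C p) (w^T) (u^T)) => h _.
have e1 : dotmx w^T u^T = (mxadj u *m w) 0 0.
  rewrite dotmxE !mxE; apply: eq_bigr => i _; rewrite !mxE mulrC //.
have e2 : forall v : 'cV[C]_p, dotmx v^T v^T = (nrm2 v)%:C.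
  move=> v; rewrite nrm2C dotmxE !mxE; apply: eq_bigr => i _; rewrite !mxE mulrC //.
have h' : `|(mxadj u *m w) 0 0| ^+ 2 <= (nrm2 w)%:C * (nrm2 u)%:C.
  by rewrite -e1 -!e2; exact: h.
move: h'; rewrite -cabsC -lecR mulrC.
have -> : ((cabs ((mxadj u *m w) 0 0))%:C ^+ 2) = (cabs ((mxadj u *m w) 0 0) ^+ 2)%:C.
  by rewrite rmorphXn.
have -> : ((nrm2 u)%:C * (nrm2 w)%:C) = (nrm2 u * nrm2 w)%:C.
  by rewrite rmorphM.
by [].
Qed.


Lemma herm_lb p (H : 'M[C]_p) (lam : C) (g : R) (b : 'cV[C]_p) :
  mxadj H = H -> 0 <= g ->
  (forall mu, eigenvalue H mu -> g <= cabs (lam - mu)) ->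
  g ^+ 2 * nrm2 b <= nrm2 ((lam%:M - H) *m b).
Proof.
move=> hH g0 hg.
have Hn : H \is normalmx by apply/normalmxP; have -> : H ^t* = H := hH.
have /orthomx_spectralP HE := Hn.
set P := spectralmx H in HE; set D := spectral_diag H in HE.
have Pu : P \is unitarymx := spectral_unitarymx H.
rewrite invmx_unitary // in HE.
have PP : P *m P^t* = 1%:M := unitarymxP Pu.
have PtP : P^t* *m P = 1%:M := mulmx1C PP.
have e : lam%:M - H = P^t* *m (lam%:M - diag_mx D) *m P.
  rewrite mulmxBr mulmxBl HE; congr (_ - _).
  by rewrite mul_mx_scalar -scalemxAl PtP scalemx1.
have hc : nrm2 (P *m b) = nrm2 b by apply: nrm2_unitary; exact: PtP.
rewrite e -!mulmxA nrm2_unitary; last by rewrite mxadjK; exact: PP.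
rewrite -hc /nrm2 mulr_sumr; apply: ler_sum => i _.
rewrite mulmxBl mul_scalar_mx mul_diag_mx !mxE -mulrBl /cabs Normc.normcM exprMn.
rewrite ler_wpM2r ?sqr_ge0 //; apply: lerXn2r; rewrite ?nnegrE ?g0 ?cabs_ge0 //.
apply: hg; apply/eigenvalueP; exists (row i P).
  rewrite -row_mul HE !mulmxA PP mul1mx row_mul.
  apply/rowP => j; rewrite !mxE (bigD1 i) //= big1 => [|l nl].
    by rewrite !mxE eqxx mulr1n addr0.
  by rewrite !mxE eq_sym (negPf nl) mulr0n mul0r.
apply/negP => /eqP hr.
have : row i (P *m P^t*) = 0 by rewrite row_mul hr mul0mx.
rewrite PP => /rowP /(_ i); rewrite !mxE eqxx /= => /eqP.
by rewrite oner_eq0.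
Qed.


Lemma fin_ineq (X Y g gp s r : R) : 0 < g -> 0 < gp -> 0 <= X -> 0 <= Y -> 0 <= r ->
  gp ^+ 2 * X <= s ^+ 2 * Y -> g ^+ 2 * Y <= r ^+ 2 ->
  Num.sqrt (X + Y) <= r * g^-1 * Num.sqrt (1 + s ^+ 2 / gp ^+ 2).
Proof.
move=> g0 gp0 X0 Y0 r0 hX hY.
have hX' : X <= s ^+ 2 / gp ^+ 2 * Y.
  by rewrite mulrAC ler_pdivlMr ?exprn_gt0 // [X * _]mulrC.
have hY' : Y <= (r / g) ^+ 2.
  by rewrite expr_div_n ler_pdivlMr ?exprn_gt0 // [Y * _]mulrC.
have t0 : 0 <= s ^+ 2 / gp ^+ 2 by rewrite divr_ge0 ?sqr_ge0.
have e : r * g^-1 = Num.sqrt ((r / g) ^+ 2).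
  by rewrite sqrtr_sqr ger0_norm // divr_ge0 // ltW.
rewrite e -sqrtrM ?sqr_ge0 // ler_sqrt; last by rewrite mulr_ge0 ?sqr_ge0 ?addr_ge0.
apply: le_trans (_ : X + Y <= Y * (1 + s ^+ 2 / gp ^+ 2)) _.
  by rewrite mulrDr mulr1 [X + Y]addrC lerD2l mulrC.
by rewrite ler_wpM2r ?addr_ge0.
Qed.

Lemma sqrt_1t (t : R) : 0 <= t -> Num.sqrt (1 + t ^+ 2) <= 1 + t.
Proof.
move=> t0.
have e : 1 + t = Num.sqrt ((1 + t) ^+ 2) by rewrite sqrtr_sqr ger0_norm // addr_ge0.
rewrite [X in _ <= X]e ler_sqrt ?sqr_ge0 // sqrrD expr1n mul1r lerD2r lerDl.
by rewrite mulrn_wge0.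
Qed.

End H.
End Helpers.
Import Helpers.

Theorem theorem3p1 (R : realType) (k m : nat) (hk : (1 <= k)%N)
  (A : 'M[R[i]]_(k.+1 + m)) (Q : 'M[R[i]]_(k.+1 + m, k.+1))
  (Qp : 'M[R[i]]_(k.+1 + m, m)) (Om : 'M[R[i]]_k.+1) (d : 'rV[R[i]]_k.+1)
  (lam : R[i]) (x : 'cV[R[i]]_(k.+1 + m)) :
  mxadj A = A ->
  mxadj Q *m Q = 1%:M ->
  mxadj Om *m Om = 1%:M ->
  mxadj Q *m A *m Q = Om *m diag_mx d *m mxadj Om ->
  mxadj (row_mx Q Qp) *m row_mx Q Qp = 1%:M ->
  A *m x = lam *: x -> vnorm x = 1 ->
  let xh := col 0 (Q *m Om) in
  let Rm := mxadj Qp *m A *m Q *m Om in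
  let R2 := rsubmx (Rm : 'M[R[i]]_(m, (1 + k)%N)) in
  let A3 := mxadj Qp *m A *m Qp in
  let Lam2 := diag_mx (rsubmx (d : 'rV[R[i]]_((1 + k)%N))) in
  let Gap := specdist A3 lam in
  let gap := fine (specdist Lam2 lam) in
  (0%:E < Gap)%E -> 0 < gap ->
  ((sin (vangle x xh))%:E
     <= (specnorm Rm)%:E * Gap^-1 * (Num.sqrt (1 + specnorm R2 ^+ 2 / gap ^+ 2))%:E)%E /\
  ((specnorm Rm)%:E * Gap^-1 * (Num.sqrt (1 + specnorm R2 ^+ 2 / gap ^+ 2))%:E
     <= (specnorm Rm)%:E * Gap^-1 * (1 + specnorm R2 / gap)%:E)%E.
Proof.
move=> hA hQ hOm hD hU hx hxn xh Rm R2 A3 Lam2 Gap gap hGap hgap.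
set X := Q *m Om.
set V := row_mx X Qp.
have hV : mxadj V *m V = 1%:M.
  have eV : V = row_mx Q Qp *m block_mx Om 0 0 1%:M.
    by rewrite mul_row_block !mulmx0 addr0 add0r mulmx1.
  rewrite eV mxadj_mul -mulmxA (mulmxA (mxadj (row_mx Q Qp))) hU mul1mx.
  have -> : mxadj (block_mx Om 0 0 (1%:M : 'M[R[i]]_m)) = block_mx (mxadj Om) 0 0 1%:M.
    by rewrite /mxadj tr_block_mx map_block_mx !trmx0 trmx1 !map_mx0 map_mx1.
  by rewrite mulmx_block !mulmx0 !mul0mx !addr0 !add0r hOm mulmx1 scalar_mx_block.
have hVV : V *m mxadj V = 1%:M := mulmx1C hV.
set a := mxadj X *m x.
set b := mxadj Qp *m x.
have ez : mxadj V *m x = col_mx a b.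
  by rewrite /V /mxadj tr_row_mx map_col_mx mul_col_mx.
have ex : x = X *m a + Qp *m b.
  by rewrite -mul_row_col -/V -ez mulmxA hVV mul1mx.
have hx1 : nrm2 x = 1 by apply: sqrt_eq1 hxn (nrm2_ge0 _).
have hn : nrm2 a + nrm2 b = 1.
  rewrite -nrm2_col -ez nrm2_unitary // mxadjK; exact: hVV.
have hA3 : mxadj A3 = A3.
  by rewrite /A3 !mxadj_mul mxadjK hA mulmxA.
have hb : mxadj Qp *m A *m x = lam *: b by rewrite -mulmxA hx -scalemxAr.
have ha : mxadj X *m A *m x = lam *: a by rewrite -mulmxA hx -scalemxAr.
have aE : a = mxadj X *m x by [].
clearbody a b.
have E1 : (lam%:M - A3) *m b = Rm *m a.
  move: hb; rewrite {1}ex mulmxDr (mulmxA _ X a) (mulmxA _ Qp b) -/A3 => h.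
  rewrite mulmxBl (mul_scalar_mx lam b) -h addrK.
  by congr (_ *m _); rewrite /Rm /X mulmxA.
set a2 := dsubmx (a : 'cV[R[i]]_(1 + k)).
set w := mxadj R2 *m b.
set d2 := rsubmx (d : 'rV[R[i]]_(1 + k)).
have E2 : forall i, (lam - d2 0 i) * a2 i 0 = w i 0.
  move: ha; rewrite {1}ex mulmxDr (mulmxA _ X a) (mulmxA _ Qp b).
  have -> : mxadj X *m A *m X = diag_mx d.
    rewrite /X !mxadj_mul -!mulmxA (mulmxA (mxadj Q)) (mulmxA (mxadj Q *m A)) hD.
    by rewrite !mulmxA hOm mul1mx -mulmxA hOm mulmx1.
  have -> : mxadj X *m A *m Qp = mxadj Rm.
    by rewrite /Rm /X !mxadj_mul mxadjK hA !mulmxA.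
  move=> h i; have /matrixP /(_ (rshift 1 i) 0) := h.
  move=> h'; rewrite mul_diag_mx !mxE in h'.
  rewrite /w /R2 /d2 /a2 !mxE mulrBl -h' addrAC subrr add0r.
  by apply: eq_bigr => j _; rewrite !mxE.
have hs2 : specdist Lam2 lam = gap%:E.
  move: hgap; rewrite /gap; case: (specdist Lam2 lam) => [r| |] //=;
  by rewrite ltxx.
have hgi : forall i, gap <= cabs (lam - d2 0 i).
  move=> i; rewrite -lee_fin -hs2; apply: ereal_inf_lbound.
  exists (d2 0 i) => //; apply/eigenvalueP; exists (delta_mx 0 i).
    by rewrite -rowE row_diag_mx.
  apply/negP => /eqP /matrixP /(_ 0 i); rewrite !mxE !eqxx /= => /eqP.
  by rewrite oner_eq0.
have hwa : gap ^+ 2 * nrm2 a2 <= nrm2 w.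
  rewrite /nrm2 mulr_sumr; apply: ler_sum => i _.
  rewrite -E2 /cabs Normc.normcM exprMn ler_wpM2r ?sqr_ge0 //.
  by apply: lerXn2r; rewrite ?nnegrE ?(ltW hgap) ?cabs_ge0 ?hgi.
have hw : nrm2 w <= specnorm R2 ^+ 2 * nrm2 b.
  have e : ((nrm2 w)%:C)%C = (mxadj b *m (R2 *m w)) 0 0.
    by rewrite nrm2C {1}/w mxadj_mul mxadjK mulmxA.
  have := cs b (R2 *m w); rewrite -e cabsR ger0_norm ?nrm2_ge0 //.
  have := sn_mul2 R2 w.
  have := nrm2_ge0 w; have := nrm2_ge0 b.
  have := sn_ge0 R2 hk.
  set W := nrm2 w; set B := nrm2 b; set s := specnorm R2 => s0 B0 W0 h1 h2.
  have h3 := le_trans h2 (ler_wpM2l B0 h1).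
  have [->|Wn0] := eqVneq W 0; first by rewrite mulr_ge0 ?sqr_ge0.
  have Wp : 0 < W by rewrite lt_def Wn0 W0.
  by rewrite -(ler_pM2r Wp) -expr2 (le_trans h3) // mulrA [B * _]mulrC.
have hsplit : nrm2 a = cabs (a 0 0) ^+ 2 + nrm2 a2.
  rewrite /nrm2 big_ord_recl; congr (_ + _); apply: eq_bigr => i _.
  by rewrite /a2 mxE; congr (cabs (a _ 0) ^+ 2); apply: val_inj.
have ea : (mxadj xh *m x) 0 0 = a 0 0.
  by rewrite aE !mxE; apply: eq_bigr => j _; rewrite !mxE.
have Y0 := nrm2_ge0 b.
have X0 := nrm2_ge0 a2.
have c0 := cabs_ge0 (a 0 0).
have c1 : cabs (a 0 0) <= 1.
  rewrite -(@ler_pXn2r _ 2) ?nnegrE // expr1n -hn hsplit -addrA lerDl.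
  by rewrite addr_ge0.
have hsin : sin (vangle x xh) = Num.sqrt (nrm2 a2 + nrm2 b).
  rewrite /vangle ea sin_acos; last by rewrite c1 andbT (le_trans _ c0) // lerN10.
  by rewrite -hn hsplit addrAC (addrAC (cabs (a 0 0) ^+ 2)) subrr add0r.
have hrho0 : 0 <= specnorm Rm := sn_ge0 Rm (ltn0Sn k).
have hs0 : 0 <= specnorm R2 := sn_ge0 R2 hk.
have hGb : forall g, Gap = g%:E -> g ^+ 2 * nrm2 b <= specnorm Rm ^+ 2.
  move=> g hg.
  have g0 : 0 <= g by move: hGap; rewrite hg lte_fin => /ltW.
  apply: le_trans (herm_lb b hA3 g0 _) _.
    move=> mu hmu; rewrite -lee_fin -hg; apply: ereal_inf_lbound.
    by exists mu.
  rewrite E1; apply: le_trans (sn_mul2 Rm a) _.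
  rewrite ler_piMr ?sqr_ge0 //.
  by rewrite -hn lerDl.
split.
  rewrite hsin; case hG : Gap => [g| |].
  - have g0 : 0 < g by move: hGap; rewrite hG lte_fin.
    rewrite inver gt_eqF // -!EFinM lee_fin.
    apply: fin_ineq => //; first exact: le_trans hwa hw.
    exact: hGb.
  - have Yz : nrm2 b = 0.
      have [mp|m0] := posnP m; last first.
        have [mu hmu] := eigenvalue_closed A3 m0.
        have : (Gap <= (cabs (lam - mu))%:E)%E by apply: ereal_inf_lbound; exists mu.
        by rewrite hG.
      rewrite /nrm2 big1 // => i _; exfalso.
      by have := ltn_ord i; move: (nat_of_ord i) => j; rewrite mp.
    have Xz : nrm2 a2 = 0.
      apply/eqP; rewrite eq_le X0 andbT.
      have := le_trans hwa hw; rewrite Yz mulr0.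
      by rewrite pmulr_rle0 // exprn_gt0.
    by rewrite Xz Yz addr0 sqrtr0 invey mule0 mul0e lee_fin.
  - by move: hGap; rewrite hG.
have hGi : (0 <= Gap^-1)%E.
  case hG : Gap => [g| |] //; last by move: hGap; rewrite hG.
  have g0 : 0 < g by move: hGap; rewrite hG lte_fin.
  by rewrite inver gt_eqF // lee_fin invr_ge0 ltW.
apply: lee_wpmul2l; first by rewrite mule_ge0 // lee_fin.
rewrite lee_fin -expr_div_n; apply: sqrt_1t.
by rewrite divr_ge0 // ltW.
Qed.
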